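(* Let $N\ge 2$ and let $(\nu_r^{(1:N)})_{r\ge1}$ be vectors of non-negative integers with $\sum_i \nu_r^{(i)} = N$, with $c_N$ and $\tau_N$ as defined below, and assume $\tau_N(u)<\infty$ for all $u\ge0$. Fix real $t > s > 0$ and $l \in \mathbb{N}$. Then (a) $\displaystyle\sum_{\substack{s_1,\dots,s_l = \tau_N(s)+1\\ \text{all distinct}}}^{\tau_N(t)} \prod_{j=1}^l c_N(s_j) \leq (t-s+1)^l \leq (t+1)^l$; (b) $\displaystyle\Bigg[(t-s)^l - \Bigg(c_N(\tau_N(s)) + \binom{l}{2}\sum_{r=\tau_N(s)+1}^{\tau_N(t)} c_N(r)^2\Bigg)(t+1)^l\Bigg]\mathbb{1}_{\{c_N(\tau_N(s)) \leq t-s\}} \leq \sum_{\substack{s_1,\dots,s_l = \tau_N(s)+1\\ \text{all distinct}}}^{\tau_N(t)} \prod_{j=1}^l c_N(s_j) \leq (t-s)^l + c_N(\tau_N(t))(t+1)^l.$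
   Context: $c_N(r) := \frac{1}{(N)_2}\sum_{i=1}^N (\nu_r^{(i)})_2$ with $(x)_k$ the falling factorial; $\tau_N(u) := \inf\{s\in\{0,1,2,\dots\} : \sum_{r=1}^s c_N(r) \ge u\}$. *)

(* Defs.v *)
From HB Require Import structures.
From mathcomp Require Import all_boot all_order all_algebra.
From mathcomp Require Import boolp reals.
Set Implicit Arguments. Unset Strict Implicit. Unset Printing Implicit Defensive.
Import Order.TTheory GRing.Theory Num.Theory.
Local Open Scope ring_scope.

Definition cN (R : realType) (N : nat) (nu : nat -> 'I_N -> nat) (r : nat) : R :=
  ((N ^_ 2)%:R)^-1 * \sum_(i < N) ((nu r i) ^_ 2)%:R.

Definition psum (R : realType) (c : nat -> R) (s : nat) : R :=
  \sum_(1 <= r < s.+1) c r.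

(* tau(u) = inf { s in N : sum_{r=1}^s c(r) >= u }  (set to 0 if the set is empty;
   the theorem assumes it is nonempty for every u >= 0) *)
Definition tau (R : realType) (c : nat -> R) (u : R) : nat :=
  match pselect (exists s, u <= psum c s) with
  | left h => ex_minn h
  | right _ => 0%N
  end.

Definition distinct_sum (R : realType) (c : nat -> R) (l a b : nat) : R :=
  \sum_(f : {ffun 'I_l -> 'I_b.+1} | injectiveb f && [forall j, (a < f j)%N])
     \prod_(j < l) c (f j).

(* Main.v *)
Require Import Defs.
From HB Require Import structures.
From mathcomp Require Import all_boot all_order all_algebra.
From mathcomp Require Import boolp reals.
From mathcomp Require Import zify ring lra.
Import Order.TTheory GRing.Theory Num.Theory.
Local Open Scope ring_scope.
Lemma ffact2_super (x y : nat) : (x ^_ 2 + y ^_ 2 <= (x + y) ^_ 2)%N.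
Proof. rewrite !(ffactnS _ 1) !ffactn1. case: x => [|x]; case: y => [|y] //=; nia. Qed.

Lemma sum_ffact2 (n : nat) (x : 'I_n -> nat) :
  (\sum_(i < n) (x i) ^_ 2 <= (\sum_(i < n) x i) ^_ 2)%N.
Proof.
apply: (big_rec2 (fun a b => (a <= b ^_ 2)%N)) => // i a b _ H.
apply: leq_trans (ffact2_super _ _); by rewrite leq_add2l.
Qed.

Section Core.
Variable R : realDomainType.

Lemma key_pow (Y c : R) (l : nat) : 0 <= Y -> 0 <= c -> c <= 1 ->
  (Y + c) ^+ l <= Y ^+ l + c * ((Y + 1) ^+ l - Y ^+ l).
Proof.
move=> Y0 c0 c1; elim: l => [|l IH]; first by rewrite !expr0 subrr mulr0 addr0.
have hY : Y ^+ l <= (Y + 1) ^+ l by rewrite lerXn2r ?nnegrE ?addr_ge0 ?lerDl.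
have yl0 : 0 <= Y ^+ l by rewrite exprn_ge0.
rewrite !exprS.
have h1 : (Y + c) * (Y + c) ^+ l <= (Y + c) * (Y ^+ l + c * ((Y + 1) ^+ l - Y ^+ l)).
  by rewrite ler_wpM2l ?addr_ge0.
apply: (le_trans h1).
have d0 : 0 <= (Y + 1) ^+ l - Y ^+ l by rewrite subr_ge0.
have : c * (Y + c) * ((Y + 1) ^+ l - Y ^+ l) <= c * (Y + 1) * ((Y + 1) ^+ l - Y ^+ l).
  by rewrite ler_wpM2r // ler_wpM2l // lerD2l.
nra.
Qed.

Lemma key_pow2 (Y c : R) (l : nat) : 0 <= Y -> 0 <= c -> c <= 1 ->
  (Y + c) ^+ l <= Y ^+ l + c * (Y + 1) ^+ l.
Proof.
move=> Y0 c0 c1; apply: (le_trans (key_pow _ _ l Y0 c0 c1)).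
rewrite lerD2l ler_wpM2l // lerBlDr lerDl exprn_ge0 //.
Qed.

End Core.
Lemma expand (R : realDomainType) (n l : nat) (F : 'I_n -> R) :
  (\sum_x F x) ^+ l = \sum_(f : {ffun 'I_l -> 'I_n}) \prod_i F (f i).
Proof.
rewrite -[in LHS](card_ord l) -prodr_const.
by rewrite (bigA_distr_bigA (fun (i : 'I_l) (x : 'I_n) => F x)).
Qed.

Section P.
Variables (R : realDomainType) (n l : nat) (F : 'I_n -> R) (B : R).
Hypotheses (F0 : forall x, 0 <= F x) (B1 : 1 <= B) (XB : \sum_x F x <= B).

Lemma pair_bound (j k : 'I_l) : j != k ->
  \sum_(f : {ffun 'I_l -> 'I_n}) ((f j == f k)%:R * \prod_i F (f i))
    <= (\sum_x F x ^+ 2) * B ^+ l.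
Proof.
move=> jk; have kj : k != j by rewrite eq_sym.
pose H (r : 'I_n) (i : 'I_l) (x : 'I_n) :=
  (if (i == j) || (i == k) then (x == r)%:R else 1) * F x.
have E1 : forall f : {ffun 'I_l -> 'I_n},
    (f j == f k)%:R * \prod_i F (f i) = \sum_r \prod_i H r i (f i).
  move=> f; rewrite /H.
  have Es : forall r : 'I_n, \prod_i ((if (i == j) || (i == k) then (f i == r)%:R else 1) * F (f i))
     = (\prod_i (if (i == j) || (i == k) then (f i == r)%:R else 1)) * \prod_i F (f i) :> R.
    by move=> r; rewrite big_split.
  rewrite (eq_bigr _ (fun r _ => Es r)).
  rewrite -big_distrl /=; congr (_ * _).
  have Ep : forall r : 'I_n, \prod_i (if (i == j) || (i == k) then (f i == r)%:R else 1)
      = (f j == r)%:R * (f k == r)%:R :> R.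
    move=> r; rewrite (bigD1 j) //=. rewrite eq_refl /= (bigD1 k) /= ?kj // eq_refl orbT.
    rewrite big1 ?mulr1 // => i /andP[/negbTE -> /negbTE ->] //.
  rewrite (eq_bigr _ (fun r _ => Ep r)).
  rewrite (bigD1 (f j)) //= eq_refl mul1r big1 => [|r /negbTE].
    by rewrite addr0 eq_sym.
  by rewrite eq_sym => ->; rewrite mul0r.
rewrite (eq_bigr _ (fun f _ => E1 f)) exchange_big /=.
under eq_bigr => r _ do rewrite -(bigA_distr_bigA (H r)) /=.
rewrite mulr_suml; apply: ler_sum => r _.
rewrite (bigD1 j) //= (bigD1 k) //=.
have Hj : \sum_x H r j x = F r.
  rewrite /H eq_refl /= (bigD1 r) //= eq_refl mul1r big1 ?addr0 // => x /negbTE ->.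
  by rewrite mul0r.
have Hk : \sum_x H r k x = F r.
  rewrite /H eq_refl orbT /= (bigD1 r) //= eq_refl mul1r big1 ?addr0 // => x /negbTE ->.
  by rewrite mul0r.
rewrite Hj Hk mulrA -expr2 ler_wpM2l ?exprn_ge0 //.
apply: (le_trans (y := \prod_(i < l | (i != j) && (i != k)) B)).
  apply: ler_prod => i /andP[/negbTE ij /negbTE ik].
  rewrite /H ij ik /=.
  under eq_bigr => x _ do rewrite mul1r.
  by rewrite XB sumr_ge0.
rewrite prodr_const ler_weXn2l //.
by rewrite -[X in (_ <= X)%N](card_ord l) max_card.
Qed.
End P.

Section Q.
Variables (R : realDomainType) (n l : nat) (F : 'I_n -> R) (B : R).
Hypotheses (F0 : forall x, 0 <= F x) (B1 : 1 <= B) (XB : \sum_x F x <= B).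

Lemma count_lt (k : 'I_l) (c : R) : \sum_(j < l | (j < k)%N) c = k%:R * c.
Proof.
rewrite -(big_mkord (fun j => (j < k)%N)).
have := big_nat_widen 0 k l xpredT (fun=> c) (ltnW (ltn_ord k)).
rewrite /= => <-. by rewrite sumr_const_nat subn0 mulr_natl.
Qed.

Lemma core :
  let X := \sum_x F x in
  let S := \sum_(f : {ffun 'I_l -> 'I_n} | injectiveb f) \prod_i F (f i) in
  [/\ 0 <= S, S <= X ^+ l & X ^+ l - S <= ('C(l, 2))%:R * (\sum_x F x ^+ 2) * B ^+ l].
Proof.
move=> X S.
have P0 : forall f : {ffun 'I_l -> 'I_n}, 0 <= \prod_i F (f i).
  by move=> f; apply: prodr_ge0.
have S0 : 0 <= S by apply: sumr_ge0.
pose T := \sum_(f : {ffun 'I_l -> 'I_n} | ~~ injectiveb f) \prod_i F (f i).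
have T0 : 0 <= T by apply: sumr_ge0.
have EX : X ^+ l = S + T.
  by rewrite /X /S /T (expand _ n l F) (bigID (fun f : {ffun 'I_l -> 'I_n} => injectiveb f)) /=.
have D : X ^+ l - S = T by rewrite EX addrC addKr.
split => //; first by rewrite EX lerDl.
rewrite D.
pose G (f : {ffun 'I_l -> 'I_n}) :=
  \sum_(k < l) \sum_(j < l | (j < k)%N) ((f j == f k)%:R * \prod_i F (f i)).
have G0 : forall f, 0 <= G f.
  move=> f; apply: sumr_ge0 => k _; apply: sumr_ge0 => j _.
  by rewrite mulr_ge0 ?ler0n.
have PG : forall f : {ffun 'I_l -> 'I_n}, ~~ injectiveb f -> \prod_i F (f i) <= G f.
  move=> f /injectivePn [x [y xy fxy]].
  wlog lt : x y xy fxy / (x < y)%N.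
    move=> W; case: (ltngtP x y) => h; first exact: W h.
      by apply: (W y x); rewrite 1?eq_sym // fxy.
    by move/val_inj: h xy => ->; rewrite eq_refl.
  rewrite /G; set P := \prod_i F (f i).
  have P0f : 0 <= P := P0 f.
  rewrite (bigD1 y) //= (bigD1 x) /= ?lt //.
  rewrite fxy eq_refl mul1r -addrA lerDl.
  apply: addr_ge0; first by apply: sumr_ge0 => j _; rewrite mulr_ge0 ?ler0n.
  apply: sumr_ge0 => k _; apply: sumr_ge0 => j _; rewrite mulr_ge0 ?ler0n //.
have TG : T <= \sum_f G f.
  rewrite (bigID (fun f : {ffun 'I_l -> 'I_n} => injectiveb f) xpredT G) /=.
  have h : T <= \sum_(f : {ffun 'I_l -> 'I_n} | ~~ injectiveb f) G f.
    by apply: ler_sum => f /PG.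
  apply: (le_trans h).
  by rewrite lerDr sumr_ge0.
apply: (le_trans TG).
rewrite /G exchange_big /=.
apply: (le_trans (y := \sum_(k < l) \sum_(j < l | (j < k)%N)
                      ((\sum_x F x ^+ 2) * B ^+ l))).
  apply: ler_sum => k _.
  rewrite exchange_big /=; apply: ler_sum => j jk.
  apply: pair_bound => //.
  by rewrite neq_ltn jk.
rewrite (eq_bigr (fun k : 'I_l => (k : nat)%:R * ((\sum_x F x ^+ 2) * B ^+ l))); last first.
  by move=> k _; rewrite count_lt.
rewrite -mulr_suml -mulrA -natr_sum -bin2_sum big_mkord //.
Qed.
End Q.

Lemma sum_shift (R : realDomainType) (G : nat -> R) (a b : nat) : (a <= b)%N ->
  \sum_(x < b.+1) (if (a < x)%N then G x else 0) = \sum_(a.+1 <= r < b.+1) G r.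
Proof.
move=> ab.
rewrite -(big_mkord xpredT (fun x => if (a < x)%N then G x else 0)).
rewrite (big_cat_nat _ (n := a.+1)) ?ltnS //=.
rewrite (eq_big_nat _ _ (F2 := fun=> 0)) => [|i /andP[_ hi]]; last first.
  by rewrite ltnNge -ltnS hi.
rewrite big1 // add0r.
by apply: eq_big_nat => i /andP[hi _]; rewrite hi.
Qed.
Theorem lemma4 (R : realType) (N : nat) (nu : nat -> 'I_N -> nat)
  (HN : (2 <= N)%N)
  (Hnu : forall r, (1 <= r)%N -> (\sum_(i < N) nu r i)%N = N)
  (Htau : forall u : R, 0 <= u -> exists s, u <= psum (cN R nu) s)
  (s t : R) (l : nat) (hs : 0 < s) (hst : s < t) :
  let c := cN R nu in
  let S := distinct_sum c l (tau c s) (tau c t) in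
  (S <= (t - s + 1) ^+ l /\ (t - s + 1) ^+ l <= (t + 1) ^+ l) /\
  ((if c (tau c s) <= t - s then 1 else 0) *
     ((t - s) ^+ l
      - (c (tau c s) + ('C(l, 2))%:R * \sum_((tau c s).+1 <= r < (tau c t).+1) c r ^+ 2)
        * (t + 1) ^+ l)
     <= S /\
   S <= (t - s) ^+ l + c (tau c t) * (t + 1) ^+ l).
Proof.
move=> c S.
have c0 : forall r, 0 <= c r.
  move=> r; rewrite /c /cN mulr_ge0 ?invr_ge0 ?ler0n //.
  by apply: sumr_ge0 => i _; rewrite ler0n.
have c1 : forall r, (1 <= r)%N -> c r <= 1.
  move=> r r1; rewrite /c /cN -natr_sum.
  have hN : (0 < N ^_ 2)%N by rewrite ffact_gt0.
  rewrite ler_pdivrMl ?ltr0n // mulr1 ler_nat.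
  by have := sum_ffact2 _ (nu r); rewrite Hnu.
have psumS : forall n, psum c n.+1 = psum c n + c n.+1.
  by move=> n; rewrite /psum big_nat_recr.
have psum0 : psum c 0 = 0 by rewrite /psum big_geq.
have tauP : forall u, 0 <= u ->
    u <= psum c (tau c u) /\ forall m, u <= psum c m -> (tau c u <= m)%N.
  move=> u hu; rewrite /tau; case: pselect => [h|nh]; last first.
    by exfalso; apply: nh; exact: Htau.
  by case: ex_minnP => m hm hmin; split => // k hk; apply: hmin.
have s0 : 0 <= s by apply: ltW.
have t0 : 0 <= t by apply: ltW; apply: lt_trans hst.
have [Ha Hamin] := tauP s s0.
have [Hb Hbmin] := tauP t t0.
set a := tau c s in Ha Hamin *.
set b := tau c t in Hb Hbmin *.
have a1 : (1 <= a)%N.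
  case: a Ha {Hamin} => [|//]; rewrite psum0 => h; exfalso.
  by move: (lt_le_trans hs h); rewrite ltxx.
have ab : (a <= b)%N by apply: Hamin; apply: le_trans Hb; apply: ltW.
have b1 : (1 <= b)%N by apply: leq_trans ab.
have Hapred : psum c a.-1 < s.
  rewrite ltNge; apply/negP => h; have := Hamin _ h.
  by case: (a) a1 => // a' _; rewrite /= ltnn.
have Hbpred : psum c b.-1 < t.
  rewrite ltNge; apply/negP => h; have := Hbmin _ h.
  by case: (b) b1 => // b' _; rewrite /= ltnn.
have Ea : psum c a = psum c a.-1 + c a by case: (a) a1 => // a' _; rewrite psumS.
have Eb : psum c b = psum c b.-1 + c b by case: (b) b1 => // b' _; rewrite psumS.
set X := \sum_(a.+1 <= r < b.+1) c r.
have EX : psum c b = psum c a + X.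
  by rewrite /psum /X (big_cat_nat _ (n := a.+1)) ?ltnS.
have X0 : 0 <= X by apply: sumr_ge0.
pose F (x : 'I_b.+1) := if (a < x)%N then c x else 0.
have F0 : forall x, 0 <= F x by move=> x; rewrite /F; case: ifP.
have sumF : \sum_x F x = X by rewrite /F sum_shift.
have sumF2 : \sum_x F x ^+ 2 = \sum_(a.+1 <= r < b.+1) c r ^+ 2.
  rewrite -sum_shift //; apply: eq_bigr => x _; rewrite /F.
  by case: ifP => //; rewrite expr0n.
have ES : S = \sum_(f : {ffun 'I_l -> 'I_b.+1} | injectiveb f) \prod_i F (f i).
  rewrite /S /distinct_sum.
  rewrite [RHS](bigID (fun f : {ffun 'I_l -> 'I_b.+1} => [forall j, (a < f j)%N])) /=.
  rewrite [X in _ = _ + X]big1 ?addr0.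
    apply: eq_bigr => f /andP[_ /forallP h]; apply: eq_bigr => i _.
    by rewrite /F h.
  move=> f /andP[_ /forallPn [j hj]].
  by rewrite (bigD1 j) //= /F (negbTE hj) mul0r.
have cb1 := c1 _ b1.
have ca1 := c1 _ a1.
have cb0 := c0 b.
have ca0 := c0 a.
have XB : X <= t + 1 by lra.
have B1 : 1 <= t + 1 by lra.
have XB' : \sum_x F x <= t + 1 by rewrite sumF.
have [S0 SX SD] := @core _ _ l F (t + 1) F0 B1 XB'.
rewrite -ES sumF sumF2 in S0 SX SD.
have tsn : 0 <= t - s by lra.
split; [split|split].
- apply: (le_trans SX); rewrite lerXn2r ?nnegrE //; lra.
- rewrite lerXn2r ?nnegrE //; lra.
- case: ifP => hca; last by rewrite mul0r.
  rewrite mul1r.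
  pose Z := t - s - c a.
  have Z0 : 0 <= Z by rewrite /Z; lra.
  have K := @key_pow2 _ _ _ l Z0 ca0 ca1.
  have ZX : Z ^+ l <= X ^+ l by rewrite lerXn2r ?nnegrE //; rewrite /Z; lra.
  have ZB : (Z + 1) ^+ l <= (t + 1) ^+ l.
    by rewrite lerXn2r ?nnegrE //; rewrite /Z; lra.
  have ZB' : c a * (Z + 1) ^+ l <= c a * (t + 1) ^+ l by rewrite ler_wpM2l.
  have EZ : Z + c a = t - s by rewrite /Z; lra.
  rewrite EZ in K.
  rewrite mulrDl; lra.
- have XY : X <= t - s + c b by lra.
  have K := @key_pow2 _ _ _ l tsn cb0 cb1.
  have XK : X ^+ l <= (t - s + c b) ^+ l by rewrite lerXn2r ?nnegrE //; lra.
  have ZB : (t - s + 1) ^+ l <= (t + 1) ^+ l by rewrite lerXn2r ?nnegrE //; lra.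
  have ZB' : c b * (t - s + 1) ^+ l <= c b * (t + 1) ^+ l by rewrite ler_wpM2l.
  lra.
Qed.
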